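(* Under the standing assumptions, writing (R1) for $\mathscr{R}(A^*AB)=\mathscr{R}(B)$ and (R2) for $\mathscr{R}(CC^*B^* )=\mathscr{R}(B^* )$, the following hold. (49) $\{M^{(1,3,4)}\}\subseteq\{C^{-1}B^{(1)}A^{-1}\}$; and $\{M^{(1,3,4)}\}\supseteq\{C^{-1}B^{(1)}A^{-1}\}\Leftrightarrow\{M^{(1,3,4)}\}=\{C^{-1}B^{(1)}A^{-1}\}\Leftrightarrow B=0$ or $r(B)=m=n$. (50) $\{M^{(1,3,4)}\}\cap\{C^{-1}B^{(1,2)}A^{-1}\}\neq\emptyset$; $\{M^{(1,3,4)}\}\supseteq\{C^{-1}B^{(1,2)}A^{-1}\}\Leftrightarrow B=0$ or $r(B)=m=n$; $\{M^{(1,3,4)}\}\subseteq\{C^{-1}B^{(1,2)}A^{-1}\}\Leftrightarrow r(B)=m$ or $r(B)=n$; $\{M^{(1,3,4)}\}=\{C^{-1}B^{(1,2)}A^{-1}\}\Leftrightarrow r(B)=m=n$. (51) $\{M^{(1,3,4)}\}\cap\{C^{-1}B^{(1,3)}A^{-1}\}\neq\emptyset\Leftrightarrow\{M^{(1,3,4)}\}\subseteq\{C^{-1}B^{(1,3)}A^{-1}\}\Leftrightarrow$ (R1); and $\{M^{(1,3,4)}\}\supseteq\{C^{-1}B^{(1,3)}A^{-1}\}\Leftrightarrow\{M^{(1,3,4)}\}=\{C^{-1}B^{(1,3)}A^{-1}\}\Leftrightarrow B=0$ or ($r(B)=n$ and (R1)). (52) $\{M^{(1,3,4)}\}\cap\{C^{-1}B^{(1,4)}A^{-1}\}\neq\emptyset\Leftrightarrow\{M^{(1,3,4)}\}\subseteq\{C^{-1}B^{(1,4)}A^{-1}\}\Leftrightarrow$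 (R2); and $\{M^{(1,3,4)}\}\supseteq\{C^{-1}B^{(1,4)}A^{-1}\}\Leftrightarrow\{M^{(1,3,4)}\}=\{C^{-1}B^{(1,4)}A^{-1}\}\Leftrightarrow B=0$ or ($r(B)=m$ and (R2)). (53) $\{M^{(1,3,4)}\}\cap\{C^{-1}B^{(1,2,3)}A^{-1}\}\neq\emptyset\Leftrightarrow$ (R1); $\{M^{(1,3,4)}\}\supseteq\{C^{-1}B^{(1,2,3)}A^{-1}\}\Leftrightarrow B=0$ or ($r(B)=n$ and (R1)); $\{M^{(1,3,4)}\}\subseteq\{C^{-1}B^{(1,2,3)}A^{-1}\}\Leftrightarrow$ (R1) and $r(B)=\min\{m,n\}$; $\{M^{(1,3,4)}\}=\{C^{-1}B^{(1,2,3)}A^{-1}\}\Leftrightarrow r(B)=n$ and (R1). (54) $\{M^{(1,3,4)}\}\cap\{C^{-1}B^{(1,2,4)}A^{-1}\}\neq\emptyset\Leftrightarrow$ (R2); $\{M^{(1,3,4)}\}\supseteq\{C^{-1}B^{(1,2,4)}A^{-1}\}\Leftrightarrow B=0$ or ($r(B)=m$ and (R2)); $\{M^{(1,3,4)}\}\subseteq\{C^{-1}B^{(1,2,4)}A^{-1}\}\Leftrightarrow$ (R2) and $r(B)=\min\{m,n\}$; $\{M^{(1,3,4)}\}=\{C^{-1}B^{(1,2,4)}A^{-1}\}\Leftrightarrow r(B)=m$ and (R2). (55) $\{M^{(1,3,4)}\}\cap\{C^{-1}B^{(1,3,4)}A^{-1}\}\neq\emptyset\Leftrightarrow\{M^{(1,3,4)}\}=\{C^{-1}B^{(1,3,4)}A^{-1}\}\Leftrightarrow$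 (R1) and (R2). (56) $C^{-1}B^\dagger A^{-1}\in\{M^{(1,3,4)}\}\Leftrightarrow$ (R1) and (R2).
   Context: Standing assumptions: $m,n\ge1$; $A\in\mathbb{C}^{m\times m}$ and $C\in\mathbb{C}^{n\times n}$ are nonsingular; $B\in\mathbb{C}^{m\times n}$; $M=ABC$. For a complex matrix $X$, $X^*$ is its conjugate transpose, $r(X)$ its rank and $\mathscr{R}(X)$ its column space. For $X\in\mathbb{C}^{p\times q}$, a matrix $G\in\mathbb{C}^{q\times p}$ is called an $\{i,\ldots,j\}$-generalized inverse of $X$ (written $X^{(i,\ldots,j)}$) if it satisfies the equations numbered $i,\ldots,j$ among the four Penrose equations (i) $XGX=X$, (ii) $GXG=G$, (iii) $(XG)^*=XG$, (iv) $(GX)^*=GX$; $\{X^{(i,\ldots,j)}\}$ denotes the set of all such $G$. The Moore–Penrose inverse $X^\dagger$ is the unique matrix satisfying all four equations. For a type $(k,\ldots,l)$, $\{C^{-1}B^{(k,\ldots,l)}A^{-1}\}:=\{C^{-1}GA^{-1}: G\in\{B^{(k,\ldots,l)}\}\}$. *)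

(* Defs.v *)
(* Complex matrices are modelled over an arbitrary
   numClosedFieldType K (e.g. algC), which carries complex conjugation. *)
From HB Require Import structures.
From mathcomp Require Import all_boot all_order all_algebra.
Set Implicit Arguments. Unset Strict Implicit. Unset Printing Implicit Defensive.
Import Order.TTheory GRing.Theory Num.Theory.
Local Open Scope ring_scope.

Definition ctr (K : numClosedFieldType) p q (X : 'M[K]_(p, q)) : 'M[K]_(q, p) :=
  (map_mx Num.conj X)^T.

Definition penrose (K : numClosedFieldType) p q (i : nat)
  (X : 'M[K]_(p, q)) (G : 'M[K]_(q, p)) : Prop :=
  match i with
  | 1%N => X *m G *m X = X
  | 2%N => G *m X *m G = G
  | 3%N => ctr (X *m G) = X *m G
  | 4%N => ctr (G *m X) = G *m X
  | _ => True
  end.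

Definition ginv (K : numClosedFieldType) p q (s : seq nat)
  (X : 'M[K]_(p, q)) (G : 'M[K]_(q, p)) : Prop :=
  forall i, i \in s -> penrose i X G.

Definition moore_penrose (K : numClosedFieldType) p q
  (X : 'M[K]_(p, q)) (G : 'M[K]_(q, p)) : Prop := ginv [:: 1; 2; 3; 4]%N X G.

Definition tgi (K : numClosedFieldType) m n (s : seq nat)
  (A : 'M[K]_m) (B : 'M[K]_(m, n)) (C : 'M[K]_n) (H : 'M[K]_(n, m)) : Prop :=
  exists G, ginv s B G /\ H = invmx C *m G *m invmx A.

(* column space equality R(X) = R(Y), via row spaces of transposes *)
Definition colspace_eq (K : numClosedFieldType) p q r
  (X : 'M[K]_(p, q)) (Y : 'M[K]_(p, r)) : Prop := (X^T == Y^T)%MS.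

Definition set_sub (T : Type) (P Q : T -> Prop) : Prop := forall x, P x -> Q x.
Definition set_eq (T : Type) (P Q : T -> Prop) : Prop := forall x, P x <-> Q x.
Definition set_meets (T : Type) (P Q : T -> Prop) : Prop := exists x, P x /\ Q x.

(* Main.v *)
Require Import Defs.
From HB Require Import structures.
From mathcomp Require Import all_boot all_order all_algebra.
From mathcomp Require Import zify.
Import Order.TTheory GRing.Theory Num.Theory.
Local Open Scope ring_scope.
Set Implicit Arguments. Unset Strict Implicit. Unset Printing Implicit Defensive.

Section Ctr.
Variable K : numClosedFieldType.
Implicit Types p q r : nat.

Lemma ctrM p q r (X : 'M[K]_(p,q)) (Y : 'M[K]_(q,r)) : ctr (X *m Y) = ctr Y *m ctr X.
Proof. by rewrite /ctr map_mxM trmx_mul. Qed.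

Lemma ctrK p q (X : 'M[K]_(p,q)) : ctr (ctr X) = X.
Proof. by apply/matrixP=> i j; rewrite /ctr !mxE conjCK. Qed.

Lemma ctr_inj p q : injective (@ctr K p q).
Proof. exact: can_inj (@ctrK p q). Qed.

Lemma ctrD p q (X Y : 'M[K]_(p,q)) : ctr (X + Y) = ctr X + ctr Y.
Proof. by apply/matrixP=> i j; rewrite /ctr !mxE rmorphD. Qed.

Lemma ctrN p q (X : 'M[K]_(p,q)) : ctr (- X) = - ctr X.
Proof. by apply/matrixP=> i j; rewrite /ctr !mxE rmorphN. Qed.

Lemma ctrB p q (X Y : 'M[K]_(p,q)) : ctr (X - Y) = ctr X - ctr Y.
Proof. by rewrite ctrD ctrN. Qed.

Lemma ctr0 p q : ctr (0 : 'M[K]_(p,q)) = 0.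
Proof. by apply/matrixP=> i j; rewrite /ctr !mxE rmorph0. Qed.

Lemma ctr1 p : ctr (1%:M : 'M[K]_p) = 1%:M.
Proof. by rewrite /ctr map_mx1 trmx1. Qed.

Lemma ctr_inv p (X : 'M[K]_p) : ctr (invmx X) = invmx (ctr X).
Proof. by rewrite /ctr map_invmx trmx_inv map_trmx. Qed.

Lemma ctr_unit p (X : 'M[K]_p) : (ctr X \in unitmx) = (X \in unitmx).
Proof. by rewrite /ctr unitmx_tr (map_unitmx Num.conj). Qed.

Lemma ctr_rank p q (X : 'M[K]_(p,q)) : \rank (ctr X) = \rank X.
Proof. by rewrite /ctr mxrank_tr (mxrank_map Num.conj). Qed.

Lemma ctr_pos p q (X : 'M[K]_(p,q)) : X *m ctr X = 0 -> X = 0.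
Proof.
move=> h; apply/matrixP=> i j; rewrite mxE.
have := congr1 (fun Z : 'M[K]_p => Z i i) h; rewrite !mxE => hs.
have hs' : \sum_k `|X i k| ^+ 2 = 0.
  by rewrite -[X in _ = X]hs; apply: eq_bigr => l _; rewrite /ctr !mxE normCK.
have h0 : `|X i j| ^+ 2 = 0.
  apply: (psumr_eq0P (P := predT) (F := fun k => `|X i k| ^+ 2)) => //.
  by move=> ? _; rewrite exprn_ge0.
by apply/eqP; rewrite -normr_eq0; move: h0 => /eqP; rewrite expf_eq0.
Qed.
End Ctr.

Section MP.
Variable K : numClosedFieldType.

Lemma unit_of_inj r (W : 'M[K]_r) : (forall Z : 'M[K]_r, Z *m W = 0 -> Z = 0) -> W \in unitmx.
Proof. by move=> h; rewrite -row_free_unit -kermx_eq0; apply/eqP; apply: h; exact: mulmx_ker. Qed.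

Lemma mp_fact p q r (F : 'M[K]_(p,r)) (Gb : 'M[K]_(r,q)) :
  row_full F -> row_free Gb -> exists G, moore_penrose (F *m Gb) G.
Proof.
move=> /row_fullP [D1 hD1] /row_freeP [D2 hD2].
set W1 := ctr F *m F; set W2 := Gb *m ctr Gb.
have hW1 : W1 \in unitmx.
  apply: unit_of_inj => Z hZ.
  have h1 : (Z *m ctr F) *m ctr (Z *m ctr F) = 0.
    by rewrite ctrM ctrK mulmxA -(mulmxA Z) hZ mul0mx.
  have h2 := ctr_pos h1.
  have h3 : F *m ctr Z = 0 by rewrite -(ctrK F) -ctrM h2 ctr0.
  have : ctr Z = 0 by rewrite -(mul1mx (ctr Z)) -hD1 -mulmxA h3 mulmx0.
  by move=> /(congr1 (@ctr _ _ _)); rewrite ctrK ctr0.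
have hW2 : W2 \in unitmx.
  apply: unit_of_inj => Z hZ.
  have h1 : (Z *m Gb) *m ctr (Z *m Gb) = 0.
    by rewrite ctrM mulmxA -(mulmxA Z) hZ mul0mx.
  have h2 := ctr_pos h1.
  by rewrite -(mulmx1 Z) -hD2 mulmxA h2 mul0mx.
have f1 : forall s (Y : 'M[K]_(s, r)), Y *m ctr F *m F = Y *m W1.
  by move=> s Y; rewrite /W1 mulmxA.
have f2 : forall s (Y : 'M[K]_(s, r)), Y *m Gb *m ctr Gb = Y *m W2.
  by move=> s Y; rewrite /W2 mulmxA.
have cW1 : ctr W1 = W1 by rewrite /W1 ctrM ctrK.
have cW2 : ctr W2 = W2 by rewrite /W2 ctrM ctrK.
exists (ctr Gb *m invmx W2 *m invmx W1 *m ctr F).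
move=> i; rewrite !inE => /or4P [] /eqP -> /=.
- by rewrite !mulmxA f2 (mulmxK hW2) f1 (mulmxKV hW1).
- by rewrite !mulmxA f1 (mulmxKV hW1) f2 (mulmxKV hW2).
- by rewrite !mulmxA f2 (mulmxK hW2) !ctrM ctrK ctr_inv cW1 !mulmxA.
- by rewrite !mulmxA f1 (mulmxKV hW1) !ctrM ctrK ctr_inv cW2 !mulmxA.
Qed.

Lemma mp_exists p q (X : 'M[K]_(p,q)) : exists G, moore_penrose X G.
Proof. by have := mp_fact (col_base_full X) (row_base_free X); rewrite mulmx_base. Qed.
End MP.

Section Pert.
Variable K : numClosedFieldType.
Lemma perturb a b c d (X : 'M[K]_(a,b)) (Y : 'M[K]_(c,d)) :
  X != 0 -> Y != 0 -> exists V, X *m V *m Y != 0.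
Proof.
move=> /matrix0Pn [i [j hij]] /matrix0Pn [k [l hkl]].
exists (delta_mx j k); apply/matrix0Pn; exists i, l.
have -> : (X *m delta_mx j k *m Y) i l = X i j * Y k l.
  rewrite mxE (bigD1 k) //= big1 => [|t htk]; last first.
    rewrite mxE big1 ?mul0r // => s _; rewrite mxE (negbTE htk) andbF mulr0 //.
  rewrite addr0 mxE (bigD1 j) //= big1 => [|s hs]; last by rewrite mxE (negbTE hs) mulr0.
  by rewrite addr0 mxE !eqxx mulr1.
by rewrite mulf_neq0.
Qed.
End Pert.

Section Preds.
Variable K : numClosedFieldType.
Definition p1 m n (B : 'M[K]_(m,n)) (G : 'M[K]_(n,m)) := B *m G *m B = B.
Definition p2 m n (B : 'M[K]_(m,n)) (G : 'M[K]_(n,m)) := G *m B *m G = G.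
Definition p3 m n (B : 'M[K]_(m,n)) (G : 'M[K]_(n,m)) := ctr (B *m G) = B *m G.
Definition p4 m n (B : 'M[K]_(m,n)) (G : 'M[K]_(n,m)) := ctr (G *m B) = G *m B.
Definition w3 m n (P : 'M[K]_m) (B : 'M[K]_(m,n)) (G : 'M[K]_(n,m)) :=
  ctr (P *m (B *m G)) = P *m (B *m G).
Definition w4 m n (Q : 'M[K]_n) (B : 'M[K]_(m,n)) (G : 'M[K]_(n,m)) :=
  ctr (G *m B *m Q) = G *m B *m Q.
Definition NN m n (P : 'M[K]_m) (Q : 'M[K]_n) (B : 'M[K]_(m,n)) (G : 'M[K]_(n,m)) :=
  [/\ p1 B G, w3 P B G & w4 Q B G].

Lemma ginv1 m n (B : 'M[K]_(m,n)) G : ginv [:: 1]%N B G <-> p1 B G.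
Proof. split=> [h|h i]; first exact: (h 1%N). by rewrite !inE => /eqP ->. Qed.
Lemma ginv12 m n (B : 'M[K]_(m,n)) G : ginv [:: 1; 2]%N B G <-> p1 B G /\ p2 B G.
Proof.
split=> [h|[h1 h2] i]; first by split; [exact: (h 1%N) | exact: (h 2%N)].
by rewrite !inE => /orP [] /eqP ->.
Qed.
Lemma ginv13 m n (B : 'M[K]_(m,n)) G : ginv [:: 1; 3]%N B G <-> p1 B G /\ p3 B G.
Proof.
split=> [h|[h1 h2] i]; first by split; [exact: (h 1%N) | exact: (h 3%N)].
by rewrite !inE => /orP [] /eqP ->.
Qed.
Lemma ginv14 m n (B : 'M[K]_(m,n)) G : ginv [:: 1; 4]%N B G <-> p1 B G /\ p4 B G.
Proof.
split=> [h|[h1 h2] i]; first by split; [exact: (h 1%N) | exact: (h 4%N)].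
by rewrite !inE => /orP [] /eqP ->.
Qed.
Lemma ginv123 m n (B : 'M[K]_(m,n)) G :
  ginv [:: 1; 2; 3]%N B G <-> [/\ p1 B G, p2 B G & p3 B G].
Proof.
split=> [h|[h1 h2 h3] i]; first by split; [exact: (h 1%N) | exact: (h 2%N) | exact: (h 3%N)].
by rewrite !inE => /or3P [] /eqP ->.
Qed.
Lemma ginv124 m n (B : 'M[K]_(m,n)) G :
  ginv [:: 1; 2; 4]%N B G <-> [/\ p1 B G, p2 B G & p4 B G].
Proof.
split=> [h|[h1 h2 h3] i]; first by split; [exact: (h 1%N) | exact: (h 2%N) | exact: (h 4%N)].
by rewrite !inE => /or3P [] /eqP ->.
Qed.
Lemma ginv134 m n (B : 'M[K]_(m,n)) G :
  ginv [:: 1; 3; 4]%N B G <-> [/\ p1 B G, p3 B G & p4 B G].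
Proof.
split=> [h|[h1 h2 h3] i]; first by split; [exact: (h 1%N) | exact: (h 3%N) | exact: (h 4%N)].
by rewrite !inE => /or3P [] /eqP ->.
Qed.
Lemma mpP m n (B : 'M[K]_(m,n)) G :
  moore_penrose B G -> [/\ p1 B G, p2 B G, p3 B G & p4 B G].
Proof. by move=> h; split; [exact: (h 1%N) | exact: (h 2%N) | exact: (h 3%N) | exact: (h 4%N)]. Qed.

Lemma herm_unique p (P X Y : 'M[K]_p) : ctr P = P -> P \in unitmx ->
  Y *m X = X -> X *m Y = Y -> ctr (P *m X) = P *m X -> ctr (P *m Y) = P *m Y -> X = Y.
Proof.
move=> hP uP YX XY hPX hPY.
have e1 : P *m X = ctr Y *m (P *m X).
  by rewrite -{1}YX mulmxA -{1}hPY ctrM hP mulmxA.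
have e2 : ctr Y *m (P *m X) = P *m Y.
  rewrite -hPX ctrM hP mulmxA -ctrM XY.
  by rewrite -hPY ctrM hP.
by rewrite -(mulKmx uP X) e1 e2 mulKmx.
Qed.
End Preds.

Section Tools.
Variable K : numClosedFieldType.

Lemma p1L m n (B : 'M[K]_(m,n)) G : p1 B G -> forall s (Y : 'M[K]_(s,m)), Y *m B *m G *m B = Y *m B.
Proof. by move=> h s Y; rewrite -!mulmxA (mulmxA B) h. Qed.

Lemma U3 m n (P : 'M[K]_m) (B : 'M[K]_(m,n)) G G' : ctr P = P -> P \in unitmx ->
  p1 B G -> p1 B G' -> w3 P B G -> w3 P B G' -> B *m G = B *m G'.
Proof.
move=> hP uP h1 h1' h3 h3'; apply: (herm_unique hP uP) => //.
  by rewrite mulmxA h1'.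
by rewrite mulmxA h1.
Qed.

Lemma U4 m n (Q : 'M[K]_n) (B : 'M[K]_(m,n)) G G' : ctr Q = Q -> Q \in unitmx ->
  p1 B G -> p1 B G' -> w4 Q B G -> w4 Q B G' -> G *m B = G' *m B.
Proof.
move=> hQ uQ h1 h1' h4 h4'.
have c : forall Z : 'M[K]_n, Q *m ctr Z = ctr (Z *m Q) by move=> Z; rewrite ctrM hQ.
apply: ctr_inj; apply: (herm_unique hQ uQ).
- by rewrite -ctrM !mulmxA (p1L h1').
- by rewrite -ctrM !mulmxA (p1L h1).
- by rewrite c ctrK h4.
- by rewrite c ctrK h4'.
Qed.

Lemma p3w3 m n (B : 'M[K]_(m,n)) G : p3 B G <-> w3 1%:M B G.
Proof. by rewrite /p3 /w3 mul1mx. Qed.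
Lemma p4w4 m n (B : 'M[K]_(m,n)) G : p4 B G <-> w4 1%:M B G.
Proof. by rewrite /p4 /w4 mulmx1. Qed.

Lemma colspaceP p q r (X : 'M[K]_(p,q)) (Y : 'M[K]_(p,r)) :
  colspace_eq X Y <-> (exists V, X = Y *m V) /\ (exists W, Y = X *m W).
Proof.
split=> [/andP [/submxP [D hD] /submxP [E hE]] | [[V hV] [W hW]]].
  split; [exists D^T | exists E^T]; apply: trmx_inj; by rewrite trmx_mul trmxK.
apply/andP; split; apply/submxP; [exists V^T | exists W^T].
  by rewrite hV trmx_mul.
by rewrite hW trmx_mul.
Qed.

Lemma full_col m n (B : 'M[K]_(m,n)) G : \rank B = n -> p1 B G -> G *m B = 1%:M.
Proof.
move=> hr h1; have : row_full B by rewrite /row_full hr.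
move=> /row_fullP [D hD].
by rewrite -[G *m B]mul1mx -hD !mulmxA (p1L h1).
Qed.

Lemma full_row m n (B : 'M[K]_(m,n)) G : \rank B = m -> p1 B G -> B *m G = 1%:M.
Proof.
move=> hr h1; have : row_free B by rewrite /row_free hr.
move=> /row_freeP [D hD].
by rewrite -[B *m G]mulmx1 -hD !mulmxA h1.
Qed.

Lemma not_full_col m n (B : 'M[K]_(m,n)) G : \rank B <> n -> 1%:M - G *m B != 0.
Proof.
move=> hr; apply/negP; rewrite subr_eq0 => /eqP h.
apply: hr; apply/eqP; change (row_full B); apply/row_fullP; exists G; by rewrite h.
Qed.

Lemma not_full_row m n (B : 'M[K]_(m,n)) G : \rank B <> m -> 1%:M - B *m G != 0.
Proof.
move=> hr; apply/negP; rewrite subr_eq0 => /eqP h.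
apply: hr; apply/eqP; change (row_free B); apply/row_freeP; exists G; by rewrite h.
Qed.

Lemma addr_self0 p q (a b : 'M[K]_(p,q)) : a + b = a -> b = 0.
Proof. by move=> e; rewrite -(addKr a b) e addNr. Qed.

Lemma p2L m n (B : 'M[K]_(m,n)) G : p2 B G -> forall s (Y : 'M[K]_(s,n)), Y *m G *m B *m G = Y *m G.
Proof. by move=> h s Y; rewrite -!mulmxA (mulmxA G) h. Qed.

Lemma kerR m n (B : 'M[K]_(m,n)) G : p1 B G -> B *m (1%:M - G *m B) = 0.
Proof. by move=> h; rewrite mulmxBr mulmx1 mulmxA h subrr. Qed.
Lemma kerL m n (B : 'M[K]_(m,n)) G : p1 B G -> (1%:M - B *m G) *m B = 0.
Proof. by move=> h; rewrite mulmxBl mul1mx h subrr. Qed.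
Lemma kerF m n (B : 'M[K]_(m,n)) G : p1 B G -> G *m B *m (1%:M - G *m B) = 0.
Proof. by move=> h; rewrite -mulmxA kerR ?mulmx0. Qed.
Lemma kerE m n (B : 'M[K]_(m,n)) G : p1 B G -> (1%:M - B *m G) *m B *m G = 0.
Proof. by move=> h; rewrite kerL ?mul0mx. Qed.

Lemma nzE m n (B : 'M[K]_(m,n)) G : p1 B G -> B != 0 -> B *m G != 0.
Proof. by move=> h hB; apply/negP => /eqP e; move: hB; rewrite -h e mul0mx eqxx. Qed.
Lemma nzF m n (B : 'M[K]_(m,n)) G : p1 B G -> B != 0 -> G *m B != 0.
Proof. by move=> h hB; apply/negP => /eqP e; move: hB; rewrite -h -mulmxA e mulmx0 eqxx. Qed.

Lemma mp_ex m n (B : 'M[K]_(m,n)) : exists G, [/\ p1 B G, p2 B G, p3 B G & p4 B G].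
Proof. by have [G /mpP h] := mp_exists B; exists G. Qed.
End Tools.


Section Gen.
Variable K : numClosedFieldType.
Variables (m n : nat) (B : 'M[K]_(m,n)) (P : 'M[K]_m) (Q : 'M[K]_n).
Hypotheses (hP : ctr P = P) (uP : P \in unitmx) (hQ : ctr Q = Q) (uQ : Q \in unitmx).
Variable G0 : 'M[K]_(n,m).
Hypotheses (hG0 : NN P Q B G0) (h2G0 : p2 B G0).
Hypotheses (hm : (0 < m)%N) (hn : (0 < n)%N).

Let N := NN P Q B.
Let R1g := colspace_eq (P *m B) B.

Lemma g1 : p1 B G0. Proof. by case: hG0. Qed.

Lemma Nchar G : N G <-> p1 B G /\ B *m G = B *m G0 /\ G *m B = G0 *m B.
Proof.
case: hG0 => h01 h03 h04.
split=> [[h1 h3 h4]|[h1 [e1 e2]]].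
  by split=> //; split; [apply: (U3 hP uP) | apply: (U4 hQ uQ)].
by split=> //; rewrite /w3 /w4 ?e1 ?e2.
Qed.

Lemma K1 G : p1 B G -> w3 P B G -> p3 B G -> R1g.
Proof.
move=> h1 h3 h3'.
have PX : P *m (B *m G) = B *m G *m P by rewrite -h3 ctrM hP h3'.
apply/colspaceP; split.
  by exists (G *m P *m B); rewrite -{1}h1 mulmxA PX !mulmxA.
have key : P *m (B *m G) *m invmx P = B *m G by rewrite PX mulmxK.
by exists (G *m invmx P *m B); rewrite !mulmxA -(mulmxA P B G) key h1.
Qed.

Lemma K2 : R1g -> forall G, N G -> p3 B G.
Proof.
move=> /colspaceP [_ [W hW]] G [h1 h3 h4].
have e : ctr (B *m G) *m P = P *m (B *m G) by rewrite -[RHS]h3 (ctrM P) hP.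
have e2 : ctr (B *m G) *m B = B.
  by rewrite {2}hW !mulmxA e !mulmxA (p1L h1) -hW.
have e3 : ctr (B *m G) *m (B *m G) = B *m G by rewrite mulmxA e2.
by rewrite /p3 -{1}e3 ctrM ctrK e3.
Qed.

Lemma N_all : B = 0 -> forall G, N G.
Proof. move=> hB G; rewrite /N /NN /p1 /w3 /w4 hB; split; rewrite ?(mul0mx, mulmx0, ctr0) //. Qed.

Lemma S12subN_B0r : set_sub (ginv [:: 1; 2]%N B) N ->
  B = 0 \/ (\rank B = m /\ \rank B = n).
Proof.
move=> h; have g01 := g1.
case: (eqVneq B 0) => [->|hB]; [by left | right].
split.
  apply/eqP; apply/negPn/negP => /eqP hr.
  have [V hV] := perturb (nzE g01 hB) (not_full_row G0 hr).
  move: hV; set Y := 1%:M - B *m G0 => hV.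
  have hYB : Y *m B = 0 by exact: kerL.
  clearbody Y.
  set G' := G0 + G0 *m V *m Y.
  have eB : G' *m B = G0 *m B.
    by rewrite /G' mulmxDl -!mulmxA hYB !mulmx0 addr0.
  have h12 : ginv [:: 1; 2]%N B G'.
    apply/ginv12; split; first by rewrite /p1 -mulmxA eB mulmxA g01.
    by rewrite /p2 eB /G' mulmxDr !mulmxA h2G0.
  have [_ [e1 _]] := (Nchar G').1 (h _ h12).
  move: e1; rewrite /G' mulmxDr !mulmxA => /addr_self0 e1.
  by move: hV; rewrite e1 eqxx.
apply/eqP; apply/negPn/negP => /eqP hr.
have [V hV] := perturb (not_full_col G0 hr) (nzF g01 hB).
move: hV; set X := 1%:M - G0 *m B => hV.
have hBX : B *m X = 0 by exact: kerR.
clearbody X.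
set G' := G0 + X *m V *m G0.
have eB : B *m G' = B *m G0.
  by rewrite /G' mulmxDr !mulmxA hBX !mul0mx addr0.
have h12 : ginv [:: 1; 2]%N B G'.
  apply/ginv12; split; first by rewrite /p1 eB g01.
  by rewrite /p2 -mulmxA eB /G' mulmxDl !mulmxA (p2L h2G0) h2G0.
have [_ [_ e2]] := (Nchar G').1 (h _ h12).
move: e2; rewrite /G' mulmxDl => /addr_self0 e2.
by move: hV; rewrite mulmxA e2 eqxx.
Qed.

Lemma B0r_NeqS1 : B = 0 \/ (\rank B = m /\ \rank B = n) -> set_eq N (ginv [:: 1]%N B).
Proof.
move=> hB0 G; split => [[h1 _ _]|/ginv1 h1]; first exact/ginv1.
case: hB0 => [hB|[hrm hrn]]; first exact: N_all.
apply/Nchar; split=> //; split.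
  by rewrite (full_row hrm h1) (full_row hrm g1).
by rewrite (full_col hrn h1) (full_col hrn g1).
Qed.

Lemma L49 : set_sub N (ginv [:: 1]%N B)
  /\ (set_sub (ginv [:: 1]%N B) N <-> set_eq N (ginv [:: 1]%N B))
  /\ (set_eq N (ginv [:: 1]%N B) <-> B = 0 \/ (\rank B = m /\ \rank B = n)).
Proof.
have sub1 : set_sub N (ginv [:: 1]%N B) by move=> G [h1 _ _]; apply/ginv1.
split=> //; split.
  split=> h G; [split; [exact: sub1 | exact: h] | exact: (h G).2].
split; last exact: B0r_NeqS1.
by move=> h; apply: S12subN_B0r => G /ginv12 [h1 _]; apply/(h G).2/ginv1.
Qed.

Lemma NsubS12 : set_sub N (ginv [:: 1; 2]%N B) <-> \rank B = m \/ \rank B = n.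
Proof.
split=> [h|hr G hG]; last first.
  have h1 : p1 B G by case: hG.
  apply/ginv12; split=> //; rewrite /p2.
  case: hr => hr.
    by rewrite -mulmxA (full_row hr h1) mulmx1.
  by rewrite (full_col hr h1) mul1mx.
case: (eqVneq (\rank B) m) => [hrm|/eqP hrm]; first by left.
case: (eqVneq (\rank B) n) => [hrn|/eqP hrn]; first by right.
exfalso.
have [V hV] := perturb (not_full_col G0 hrn) (not_full_row G0 hrm).
move: hV; set X := 1%:M - G0 *m B; set Y := 1%:M - B *m G0 => hV.
have hBX : B *m X = 0 by exact: kerR g1.
have hYB : Y *m B = 0 by exact: kerL g1.
have hFX : G0 *m B *m X = 0 by exact: kerF g1.
clearbody X Y.
set G' := G0 + X *m V *m Y.
have hN : N G'.
  apply/Nchar; split; last split.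
  - by rewrite /p1 /G' mulmxDr mulmxDl !mulmxA g1 hBX !mul0mx addr0.
  - by rewrite /G' mulmxDr !mulmxA hBX !mul0mx addr0.
  - by rewrite /G' mulmxDl -!mulmxA hYB !mulmx0 addr0.
have [_ [_ eB]] := (Nchar G').1 hN.
have := h _ hN => /ginv12 [_ h2].
move: h2; rewrite /p2 eB /G' mulmxDr !mulmxA h2G0 hFX !mul0mx addr0.
move/esym/addr_self0 => e.
by move: hV; rewrite e eqxx.
Qed.

Lemma L50 : set_meets N (ginv [:: 1; 2]%N B)
  /\ (set_sub (ginv [:: 1; 2]%N B) N <-> B = 0 \/ (\rank B = m /\ \rank B = n))
  /\ (set_sub N (ginv [:: 1; 2]%N B) <-> \rank B = m \/ \rank B = n)
  /\ (set_eq N (ginv [:: 1; 2]%N B) <-> \rank B = m /\ \rank B = n).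
Proof.
split.
  by exists G0; split=> //; apply/ginv12; split=> //; exact: g1.
split.
  split; first exact: S12subN_B0r.
  by move=> /B0r_NeqS1 h G /ginv12 [h1 _]; apply/(h G).2/ginv1.
split; first exact: NsubS12.
split=> [h|[hrm hrn] G].
  have [hB|//] := S12subN_B0r (fun G hG => (h G).2 hG).
  exfalso; have := NsubS12.1 (fun G hG => (h G).1 hG).
  by rewrite hB mxrank0; case=> e; [move: hm | move: hn]; rewrite -e.
split; first by move=> hG; apply: NsubS12.2 => //; left.
move=> /ginv12 [h1 _].
by apply: (B0r_NeqS1 (or_intror (conj hrm hrn)) G).2; apply/ginv1.
Qed.

Lemma NsubS13 : set_sub N (ginv [:: 1; 3]%N B) <-> R1g.
Proof.
split=> [h|hR G hG].
  have /ginv13 [h1 h3] := h _ hG0.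
  by case: hG0 => _ h3w _; exact: K1 h1 h3w h3.
by apply/ginv13; split; [case: hG | exact: K2 hR G hG].
Qed.

Lemma meetsS13 : set_meets N (ginv [:: 1; 3]%N B) <-> R1g.
Proof.
split=> [[G [[h1 h3w _] /ginv13 [_ h3]]]|hR]; first exact: K1 h1 h3w h3.
by exists G0; split=> //; exact: (NsubS13.2 hR G0 hG0).
Qed.

Lemma S13subN_eq : set_sub (ginv [:: 1; 3]%N B) N <-> set_eq N (ginv [:: 1; 3]%N B).
Proof.
split=> [h|h G]; last exact: (h G).2.
have [Gd [d1 _ d3 _]] := mp_ex B.
have hd : N Gd by apply: h; apply/ginv13.
have hR : R1g by case: hd => _ w _; exact: K1 d1 w d3.
by move=> G; split; [exact: (NsubS13.2 hR G) | exact: h].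
Qed.

Lemma eqS13 : set_eq N (ginv [:: 1; 3]%N B) <-> B = 0 \/ (\rank B = n /\ R1g).
Proof.
split=> [h|]; last first.
  case=> [hB G|[hrn hR] G].
    split=> _; last exact: N_all.
    by apply/ginv13; rewrite /p1 /p3 hB; split; rewrite ?(mul0mx, mulmx0, ctr0).
  split; first exact: (NsubS13.2 hR G).
  move=> /ginv13 [h1 h3]; apply/Nchar; split=> //; split.
    exact: (U3 (ctr1 K m) (unitmx1 _ _) h1 g1 ((p3w3 B G).1 h3) ((p3w3 B G0).1 (K2 hR hG0))).
  by rewrite (full_col hrn h1) (full_col hrn g1).
have hR : R1g := NsubS13.1 (fun G hG => (h G).1 hG).
case: (eqVneq B 0) => [hB|hB]; [by left | right; split => //].
apply/eqP; apply/negPn/negP => /eqP hr.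
have [V hV] := perturb (not_full_col G0 hr) hB.
move: hV; set X := 1%:M - G0 *m B => hV.
have hBX : B *m X = 0 by exact: kerR g1.
clearbody X.
set G' := G0 + X *m V.
have eB : B *m G' = B *m G0 by rewrite /G' mulmxDr mulmxA hBX mul0mx addr0.
have hG' : ginv [:: 1; 3]%N B G'.
  apply/ginv13; split; first by rewrite /p1 eB g1.
  by rewrite /p3 eB; exact: (K2 hR hG0).
have [_ [_ e2]] := (Nchar G').1 ((h G').2 hG').
move: e2; rewrite /G' mulmxDl => /addr_self0 e2.
by move: hV; rewrite e2 eqxx.
Qed.

Lemma L51 : (set_meets N (ginv [:: 1; 3]%N B) <-> set_sub N (ginv [:: 1; 3]%N B))
   /\ (set_sub N (ginv [:: 1; 3]%N B) <-> R1g)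
   /\ (set_sub (ginv [:: 1; 3]%N B) N <-> set_eq N (ginv [:: 1; 3]%N B))
   /\ (set_eq N (ginv [:: 1; 3]%N B) <-> (B = 0 \/ (\rank B = n /\ R1g))).
Proof.
split; last by split; [exact: NsubS13 | split; [exact: S13subN_eq | exact: eqS13]].
split=> h; [exact/NsubS13/meetsS13 | exact/meetsS13/NsubS13].
Qed.

Lemma meetsS123 : set_meets N (ginv [:: 1; 2; 3]%N B) <-> R1g.
Proof.
split=> [[G [[h1 h3w _] /ginv123 [_ _ h3]]]|hR]; first exact: K1 h1 h3w h3.
exists G0; split=> //; apply/ginv123; split=> //; [exact: g1 | exact: (K2 hR hG0)].
Qed.

Lemma S123subN : set_sub (ginv [:: 1; 2; 3]%N B) N <-> B = 0 \/ (\rank B = n /\ R1g).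
Proof.
split=> [h|]; last first.
  case=> [hB G _|hr G /ginv123 [h1 _ h3]]; first exact: N_all.
  by apply: ((eqS13.2 (or_intror hr)) G).2; apply/ginv13.
have [Gd [d1 d2 d3 _]] := mp_ex B.
have hd : N Gd by apply: h; apply/ginv123.
have hR : R1g by case: hd => _ w _; exact: K1 d1 w d3.
case: (eqVneq B 0) => [hB|hB]; [by left | right; split => //].
apply/eqP; apply/negPn/negP => /eqP hr.
have [V hV] := perturb (not_full_col G0 hr) (nzF g1 hB).
move: hV; set X := 1%:M - G0 *m B => hV.
have hBX : B *m X = 0 by exact: kerR g1.
clearbody X.
set G' := G0 + X *m V *m G0.
have eB : B *m G' = B *m G0.
  by rewrite /G' mulmxDr !mulmxA hBX !mul0mx addr0.
have hG' : ginv [:: 1; 2; 3]%N B G'.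
  apply/ginv123; split; first by rewrite /p1 eB g1.
    by rewrite /p2 -mulmxA eB /G' mulmxDl !mulmxA (p2L h2G0) h2G0.
  by rewrite /p3 eB; exact: (K2 hR hG0).
have [_ [_ e2]] := (Nchar G').1 (h G' hG').
move: e2; rewrite /G' mulmxDl => /addr_self0 e2.
by move: hV; rewrite mulmxA e2 eqxx.
Qed.

Lemma NsubS123 : set_sub N (ginv [:: 1; 2; 3]%N B) <-> R1g /\ \rank B = minn m n.
Proof.
have rm := rank_leq_row B; have rn := rank_leq_col B.
split=> [h|[hR hr] G hG].
  split.
    by apply/NsubS13 => G hG; have /ginv123 [h1 _ h3] := h G hG; apply/ginv13.
  have : \rank B = m \/ \rank B = n.
    by apply/NsubS12 => G hG; have /ginv123 [h1 h2 _] := h G hG; apply/ginv12.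
  lia.
have hmn : \rank B = m \/ \rank B = n by lia.
have /ginv12 [h1 h2] := NsubS12.2 hmn G hG.
have /ginv13 [_ h3] := NsubS13.2 hR G hG.
by apply/ginv123.
Qed.

Lemma eqS123 : set_eq N (ginv [:: 1; 2; 3]%N B) <-> \rank B = n /\ R1g.
Proof.
have rm := rank_leq_row B; have rn := rank_leq_col B.
split=> [h|[hrn hR] G].
  have [hB|//] := S123subN.1 (fun G hG => (h G).2 hG).
  have [_ hr] := NsubS123.1 (fun G hG => (h G).1 hG).
  by move: hr; rewrite hB mxrank0; lia.
split; first by apply: (NsubS123.2 (conj hR _)); lia.
by apply: S123subN.2; right.
Qed.

Lemma L53 : (set_meets N (ginv [:: 1; 2; 3]%N B) <-> R1g)
   /\ (set_sub (ginv [:: 1; 2; 3]%N B) N <-> (B = 0 \/ (\rank B = n /\ R1g)))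
   /\ (set_sub N (ginv [:: 1; 2; 3]%N B) <-> (R1g /\ \rank B = minn m n))
   /\ (set_eq N (ginv [:: 1; 2; 3]%N B) <-> (\rank B = n /\ R1g)).
Proof.
split; first exact: meetsS123.
split; first exact: S123subN.
split; first exact: NsubS123.
exact: eqS123.
Qed.
End Gen.

Section Transp.
Lemma sub_tr (T1 T2 : Type) (f : T1 -> T2) (g : T2 -> T1) (X Y : T1 -> Prop) (X' Y' : T2 -> Prop) :
  cancel g f -> (forall x, X x <-> X' (f x)) -> (forall x, Y x <-> Y' (f x)) ->
  (set_sub X Y <-> set_sub X' Y').
Proof.
move=> gK hX hY; split=> h x hx.
  by rewrite -[x]gK; apply/hY/h/hX; rewrite gK.
by apply/hY/h/hX.
Qed.

Lemma meets_tr (T1 T2 : Type) (f : T1 -> T2) (g : T2 -> T1) (X Y : T1 -> Prop) (X' Y' : T2 -> Prop) :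
  cancel g f -> (forall x, X x <-> X' (f x)) -> (forall x, Y x <-> Y' (f x)) ->
  (set_meets X Y <-> set_meets X' Y').
Proof.
move=> gK hX hY; split=> [[x [a b]]|[x [a b]]].
  by exists (f x); split; [apply/hX | apply/hY].
by exists (g x); split; [apply/hX | apply/hY]; rewrite gK.
Qed.

Lemma eq_tr (T1 T2 : Type) (f : T1 -> T2) (g : T2 -> T1) (X Y : T1 -> Prop) (X' Y' : T2 -> Prop) :
  cancel g f -> (forall x, X x <-> X' (f x)) -> (forall x, Y x <-> Y' (f x)) ->
  (set_eq X Y <-> set_eq X' Y').
Proof.
move=> gK hX hY; split=> h x.
  rewrite -[x]gK; split=> hx.
    by apply/hY/(h _).1/hX.
  by apply/hX/(h _).2/hY.
split=> hx; [apply/hY/(h _).1/hX | apply/hX/(h _).2/hY] => //.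
Qed.
End Transp.

Section CtrT.
Variable K : numClosedFieldType.
Variables (m n : nat) (B : 'M[K]_(m,n)) (G : 'M[K]_(n,m)).

Lemma tp1 : p1 B G <-> p1 (ctr B) (ctr G).
Proof. by rewrite /p1 -mulmxA -!ctrM; split=> [->|/ctr_inj]. Qed.
Lemma tp2 : p2 B G <-> p2 (ctr B) (ctr G).
Proof. by rewrite /p2 -mulmxA -!ctrM; split=> [->|/ctr_inj]. Qed.
Lemma tp4 : p4 B G <-> p3 (ctr B) (ctr G).
Proof. by rewrite /p3 /p4 -ctrM ctrK; split=> [->|<-]; rewrite ?ctrK. Qed.
Lemma tp3 : p3 B G <-> p4 (ctr B) (ctr G).
Proof. by rewrite /p3 /p4 -ctrM ctrK; split=> [->|<-]; rewrite ?ctrK. Qed.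

Lemma tN (P : 'M[K]_m) (Q : 'M[K]_n) : ctr P = P -> ctr Q = Q ->
  NN P Q B G <-> NN Q P (ctr B) (ctr G).
Proof.
move=> hP hQ.
have eQ : forall Z : 'M[K]_n, Q *m ctr Z = ctr (Z *m Q) by move=> Z; rewrite ctrM hQ.
have eP : forall Z : 'M[K]_m, ctr Z *m P = ctr (P *m Z) by move=> Z; rewrite ctrM hP.
have a3 : w3 P B G <-> w4 P (ctr B) (ctr G).
  by rewrite /w3 /w4 -ctrM eP ctrK; split=> [->|<-]; rewrite ?ctrK.
have a4 : w4 Q B G <-> w3 Q (ctr B) (ctr G).
  by rewrite /w3 /w4 -ctrM eQ ctrK; split=> [->|<-]; rewrite ?ctrK.
split=> [[h1 h3 h4]|[h1 h3 h4]]; split; try (by apply/tp1); try (by apply/a3); by apply/a4.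
Qed.

Lemma t1 : ginv [:: 1]%N B G <-> ginv [:: 1]%N (ctr B) (ctr G).
Proof. by split=> /ginv1 h; apply/ginv1; apply/tp1. Qed.
Lemma t12 : ginv [:: 1; 2]%N B G <-> ginv [:: 1; 2]%N (ctr B) (ctr G).
Proof. by split=> /ginv12 [h1 h2]; apply/ginv12; split; apply/tp1 || apply/tp2. Qed.
Lemma t14 : ginv [:: 1; 4]%N B G <-> ginv [:: 1; 3]%N (ctr B) (ctr G).
Proof.
split=> [/ginv14 [h1 h2]|/ginv13 [h1 h2]]; [apply/ginv13 | apply/ginv14]; split;
  (by apply/tp1) || by apply/tp4.
Qed.
Lemma t124 : ginv [:: 1; 2; 4]%N B G <-> ginv [:: 1; 2; 3]%N (ctr B) (ctr G).
Proof.
split=> [/ginv124 [h1 h2 h3]|/ginv123 [h1 h2 h3]]; [apply/ginv123 | apply/ginv124]; split;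
  (by apply/tp1) || (by apply/tp2) || by apply/tp4.
Qed.
End CtrT.

Section Gen4.
Variable K : numClosedFieldType.
Variables (m n : nat) (B : 'M[K]_(m,n)) (P : 'M[K]_m) (Q : 'M[K]_n).
Hypotheses (hP : ctr P = P) (uP : P \in unitmx) (hQ : ctr Q = Q) (uQ : Q \in unitmx).
Variable G0 : 'M[K]_(n,m).
Hypotheses (hG0 : NN P Q B G0) (h2G0 : p2 B G0).
Hypotheses (hm : (0 < m)%N) (hn : (0 < n)%N).

Let N := NN P Q B.
Let R1g := colspace_eq (P *m B) B.
Let R2g := colspace_eq (Q *m ctr B) (ctr B).

Let hG0' : NN Q P (ctr B) (ctr G0) := (tN B G0 hP hQ).1 hG0.
Let h2G0' : p2 (ctr B) (ctr G0) := (tp2 B G0).1 h2G0.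

Lemma ctrB0 : ctr B = 0 <-> B = 0.
Proof. by split=> [h|->]; [apply: ctr_inj; rewrite h ctr0 | exact: ctr0]. Qed.

Let trN : forall G, N G <-> NN Q P (ctr B) (ctr G) := fun G => tN B G hP hQ.

Lemma L52 : (set_meets N (ginv [:: 1; 4]%N B) <-> set_sub N (ginv [:: 1; 4]%N B))
   /\ (set_sub N (ginv [:: 1; 4]%N B) <-> R2g)
   /\ (set_sub (ginv [:: 1; 4]%N B) N <-> set_eq N (ginv [:: 1; 4]%N B))
   /\ (set_eq N (ginv [:: 1; 4]%N B) <-> (B = 0 \/ (\rank B = m /\ R2g))).
Proof.
have L := L51 hQ uQ hP uP hG0'.
have e1 := meets_tr (@ctrK _ _ _) trN (t14 B).
have e2 := sub_tr (@ctrK _ _ _) trN (t14 B).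
have e3 := sub_tr (@ctrK _ _ _) (t14 B) trN.
have e4 := eq_tr (@ctrK _ _ _) trN (t14 B).
move: L; rewrite ctr_rank; have := ctrB0; rewrite /R2g; tauto.
Qed.

Lemma L54 : (set_meets N (ginv [:: 1; 2; 4]%N B) <-> R2g)
   /\ (set_sub (ginv [:: 1; 2; 4]%N B) N <-> (B = 0 \/ (\rank B = m /\ R2g)))
   /\ (set_sub N (ginv [:: 1; 2; 4]%N B) <-> (R2g /\ \rank B = minn m n))
   /\ (set_eq N (ginv [:: 1; 2; 4]%N B) <-> (\rank B = m /\ R2g)).
Proof.
have L := L53 hQ uQ hP uP hG0' h2G0' hn hm.
have e1 := meets_tr (@ctrK _ _ _) trN (t124 B).
have e2 := sub_tr (@ctrK _ _ _) trN (t124 B).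
have e3 := sub_tr (@ctrK _ _ _) (t124 B) trN.
have e4 := eq_tr (@ctrK _ _ _) trN (t124 B).
move: L; rewrite ctr_rank minnC; have := ctrB0; rewrite /R2g; tauto.
Qed.
End Gen4.

Section Gen5.
Variable K : numClosedFieldType.
Variables (m n : nat) (B : 'M[K]_(m,n)) (P : 'M[K]_m) (Q : 'M[K]_n).
Hypotheses (hP : ctr P = P) (uP : P \in unitmx) (hQ : ctr Q = Q) (uQ : Q \in unitmx).
Variable G0 : 'M[K]_(n,m).
Hypotheses (hG0 : NN P Q B G0) (h2G0 : p2 B G0).

Let N := NN P Q B.
Let R1g := colspace_eq (P *m B) B.
Let R2g := colspace_eq (Q *m ctr B) (ctr B).

Lemma toR : set_meets N (ginv [:: 1; 3; 4]%N B) -> R1g /\ R2g.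
Proof.
have [A1 [A2 _]] := L51 hP uP hQ uQ hG0.
have [B1 [B2 _]] := L52 hP uP hQ uQ hG0.
move=> [G [hN /ginv134 [h1 h3 h4]]].
split; [apply/A2/A1 | apply/B2/B1]; exists G; split => //; [apply/ginv13 | apply/ginv14]; by split.
Qed.

Lemma fromR : R1g /\ R2g -> set_eq N (ginv [:: 1; 3; 4]%N B).
Proof.
have [A1 [A2 _]] := L51 hP uP hQ uQ hG0.
have [B1 [B2 _]] := L52 hP uP hQ uQ hG0.
have g01 : p1 B G0 by case: hG0.
move=> [r1 r2] G; split=> [hN|/ginv134 [h1 h3 h4]].
  have /ginv13 [h1 h3] := A2.2 r1 G hN; have /ginv14 [_ h4] := B2.2 r2 G hN.
  by apply/ginv134; split.
have /ginv13 [_ g3] := A2.2 r1 G0 hG0; have /ginv14 [_ g4] := B2.2 r2 G0 hG0.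
apply/(Nchar hP uP hQ uQ hG0); split=> //; split.
  exact: (U3 (ctr1 K m) (unitmx1 _ _) h1 g01 ((p3w3 B G).1 h3) ((p3w3 B G0).1 g3)).
exact: (U4 (ctr1 K n) (unitmx1 _ _) h1 g01 ((p4w4 B G).1 h4) ((p4w4 B G0).1 g4)).
Qed.

Lemma L55 : (set_meets N (ginv [:: 1; 3; 4]%N B) <-> set_eq N (ginv [:: 1; 3; 4]%N B))
   /\ (set_eq N (ginv [:: 1; 3; 4]%N B) <-> R1g /\ R2g).
Proof.
have toM : set_eq N (ginv [:: 1; 3; 4]%N B) -> set_meets N (ginv [:: 1; 3; 4]%N B).
  by move=> h; exists G0; split=> //; apply/(h G0).1.
have := toR; have := fromR; tauto.
Qed.

Lemma L56 Bd : moore_penrose B Bd -> (N Bd <-> R1g /\ R2g).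
Proof.
move=> /mpP [d1 d2 d3 d4]; split=> [hN|hR].
  by apply: toR; exists Bd; split=> //; apply/ginv134.
by apply: ((fromR hR) Bd).2; apply/ginv134.
Qed.
End Gen5.

Section Conj.
Variable K : numClosedFieldType.

Lemma canAC p q (U : 'M[K]_p) (W : 'M[K]_q) (X Y : 'M[K]_(p,q)) :
  U \in unitmx -> W \in unitmx -> (U *m X *m W = U *m Y *m W <-> X = Y).
Proof.
move=> hU hW; split=> [|->//].
move=> /(congr1 (fun Z => invmx U *m Z *m invmx W)).
by rewrite !mulmxA !(mulmxK hW) !(mulVmx hU) !mul1mx.
Qed.

Lemma herm_conj p (A Z : 'M[K]_p) : A \in unitmx ->
  (ctr (A *m Z *m invmx A) = A *m Z *m invmx A <-> ctr (ctr A *m A *m Z) = ctr A *m A *m Z).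
Proof.
move=> hA; have hcA : ctr A \in unitmx by rewrite ctr_unit.
rewrite -(canAC _ _ hcA hA).
have -> : ctr A *m ctr (A *m Z *m invmx A) *m A = ctr (ctr A *m A *m Z).
  by rewrite !ctrM ctrK ctr_inv !mulmxA (mulmxV hcA) mul1mx.
by rewrite !mulmxA (mulmxKV hA).
Qed.

Lemma herm_conj2 p (C W : 'M[K]_p) : C \in unitmx ->
  (ctr (invmx C *m W *m C) = invmx C *m W *m C <-> ctr (W *m (C *m ctr C)) = W *m (C *m ctr C)).
Proof.
move=> hC; have hcC : ctr C \in unitmx by rewrite ctr_unit.
rewrite -(canAC _ _ hC hcC).
have -> : C *m ctr (invmx C *m W *m C) *m ctr C = ctr (W *m (C *m ctr C)).
  by rewrite !ctrM ctrK ctr_inv !mulmxA (mulmxKV hcC).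
by rewrite !mulmxA (mulmxV hC) mul1mx.
Qed.
End Conj.

Theorem theorem4p2 (K : numClosedFieldType) (m n : nat)
  (A : 'M[K]_m) (B : 'M[K]_(m, n)) (C : 'M[K]_n)
  (hm : (0 < m)%N) (hn : (0 < n)%N)
  (hA : A \in unitmx) (hC : C \in unitmx) :
  let M := A *m B *m C in
  let M134 := ginv [:: 1; 3; 4]%N M in
  let T s := tgi s A B C in
  let R1 := colspace_eq (ctr A *m A *m B) B in
  let R2 := colspace_eq (C *m ctr C *m ctr B) (ctr B) in
  let B0r := B = 0 \/ (\rank B = m /\ \rank B = n) in
  (* (49) *)
  (set_sub M134 (T [:: 1]%N)
   /\ (set_sub (T [:: 1]%N) M134 <-> set_eq M134 (T [:: 1]%N))
   /\ (set_eq M134 (T [:: 1]%N) <-> B0r))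
  (* (50) *)
  /\ (set_meets M134 (T [:: 1; 2]%N)
   /\ (set_sub (T [:: 1; 2]%N) M134 <-> B0r)
   /\ (set_sub M134 (T [:: 1; 2]%N) <-> (\rank B = m \/ \rank B = n))
   /\ (set_eq M134 (T [:: 1; 2]%N) <-> (\rank B = m /\ \rank B = n)))
  (* (51) *)
  /\ ((set_meets M134 (T [:: 1; 3]%N) <-> set_sub M134 (T [:: 1; 3]%N))
   /\ (set_sub M134 (T [:: 1; 3]%N) <-> R1)
   /\ (set_sub (T [:: 1; 3]%N) M134 <-> set_eq M134 (T [:: 1; 3]%N))
   /\ (set_eq M134 (T [:: 1; 3]%N) <-> (B = 0 \/ (\rank B = n /\ R1))))
  (* (52) *)
  /\ ((set_meets M134 (T [:: 1; 4]%N) <-> set_sub M134 (T [:: 1; 4]%N))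
   /\ (set_sub M134 (T [:: 1; 4]%N) <-> R2)
   /\ (set_sub (T [:: 1; 4]%N) M134 <-> set_eq M134 (T [:: 1; 4]%N))
   /\ (set_eq M134 (T [:: 1; 4]%N) <-> (B = 0 \/ (\rank B = m /\ R2))))
  (* (53) *)
  /\ ((set_meets M134 (T [:: 1; 2; 3]%N) <-> R1)
   /\ (set_sub (T [:: 1; 2; 3]%N) M134 <-> (B = 0 \/ (\rank B = n /\ R1)))
   /\ (set_sub M134 (T [:: 1; 2; 3]%N) <-> (R1 /\ \rank B = minn m n))
   /\ (set_eq M134 (T [:: 1; 2; 3]%N) <-> (\rank B = n /\ R1)))
  (* (54) *)
  /\ ((set_meets M134 (T [:: 1; 2; 4]%N) <-> R2)
   /\ (set_sub (T [:: 1; 2; 4]%N) M134 <-> (B = 0 \/ (\rank B = m /\ R2)))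
   /\ (set_sub M134 (T [:: 1; 2; 4]%N) <-> (R2 /\ \rank B = minn m n))
   /\ (set_eq M134 (T [:: 1; 2; 4]%N) <-> (\rank B = m /\ R2)))
  (* (55) *)
  /\ ((set_meets M134 (T [:: 1; 3; 4]%N) <-> set_eq M134 (T [:: 1; 3; 4]%N))
   /\ (set_eq M134 (T [:: 1; 3; 4]%N) <-> (R1 /\ R2)))
  (* (56) *)
  /\ (forall Bd, moore_penrose B Bd ->
        (M134 (invmx C *m Bd *m invmx A) <-> (R1 /\ R2))).
Proof.
cbv beta zeta.
have hP : ctr (ctr A *m A) = ctr A *m A by rewrite ctrM ctrK.
have uP : ctr A *m A \in unitmx by rewrite unitmx_mul ctr_unit hA.
have hQ : ctr (C *m ctr C) = C *m ctr C by rewrite ctrM ctrK.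
have uQ : C *m ctr C \in unitmx by rewrite unitmx_mul ctr_unit hC.
pose f := fun H : 'M[K]_(n,m) => C *m H *m A.
pose g := fun G : 'M[K]_(n,m) => invmx C *m G *m invmx A.
have gK : cancel g f by move=> G; rewrite /f /g !mulmxA (mulmxV hC) mul1mx (mulmxKV hA).
have key1 : forall H, ginv [:: 1; 3; 4]%N (A *m B *m C) H
    <-> NN (ctr A *m A) (C *m ctr C) B (f H).
  move=> H.
  have c1 : p1 (A *m B *m C) H <-> p1 B (f H).
    rewrite /p1 /f.
    have -> : A *m B *m C *m H *m (A *m B *m C) = A *m (B *m (C *m H *m A) *m B) *m C.
      by rewrite !mulmxA.
    exact: canAC.
  have c3 : p3 (A *m B *m C) H <-> w3 (ctr A *m A) B (f H).
    rewrite /p3 /w3 /f.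
    have -> : A *m B *m C *m H = A *m (B *m (C *m H *m A)) *m invmx A.
      by rewrite !mulmxA (mulmxK hA).
    exact: herm_conj.
  have c4 : p4 (A *m B *m C) H <-> w4 (C *m ctr C) B (f H).
    rewrite /p4 /w4 /f.
    have -> : H *m (A *m B *m C) = invmx C *m (C *m H *m A *m B) *m C.
      by rewrite !mulmxA (mulVmx hC) mul1mx.
    exact: herm_conj2.
  split=> [/ginv134 [h1 h3 h4]|[h1 h3 h4]].
    by split; [apply/c1 | apply/c3 | apply/c4].
  by apply/ginv134; split; [apply/c1 | apply/c3 | apply/c4].
have key2 : forall s H, tgi s A B C H <-> ginv s B (f H).
  move=> s H; split=> [[G [hG ->]]|h].
    by have := gK G; rewrite /g => ->.
  exists (f H); split=> //.
  by rewrite /f !mulmxA (mulVmx hC) mul1mx (mulmxK hA).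
have [Hm [m1 m2 m3 m4]] := mp_ex (A *m B *m C).
have hG0 : NN (ctr A *m A) (C *m ctr C) B (f Hm) by apply/key1/ginv134.
have h2G0 : p2 B (f Hm).
  rewrite /p2 /f.
  transitivity (C *m (Hm *m (A *m B *m C) *m Hm) *m A); first by rewrite !mulmxA.
  by rewrite m2.
have tS := fun s => sub_tr gK key1 (key2 s).
have tS' := fun s => sub_tr gK (key2 s) key1.
have tM := fun s => meets_tr gK key1 (key2 s).
have tE := fun s => eq_tr gK key1 (key2 s).
split.
  have := L49 hP uP hQ uQ hG0 h2G0.
  have := tS [:: 1]%N; have := tS' [:: 1]%N; have := tE [:: 1]%N; tauto.
split.
  have := L50 hP uP hQ uQ hG0 h2G0 hm hn.
  have := tS [:: 1; 2]%N; have := tS' [:: 1; 2]%N; have := tE [:: 1; 2]%N;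
  have := tM [:: 1; 2]%N; tauto.
split.
  have := L51 hP uP hQ uQ hG0.
  have := tS [:: 1; 3]%N; have := tS' [:: 1; 3]%N; have := tE [:: 1; 3]%N;
  have := tM [:: 1; 3]%N; tauto.
split.
  have := L52 hP uP hQ uQ hG0.
  have := tS [:: 1; 4]%N; have := tS' [:: 1; 4]%N; have := tE [:: 1; 4]%N;
  have := tM [:: 1; 4]%N; tauto.
split.
  have := L53 hP uP hQ uQ hG0 h2G0 hm hn.
  have := tS [:: 1; 2; 3]%N; have := tS' [:: 1; 2; 3]%N; have := tE [:: 1; 2; 3]%N;
  have := tM [:: 1; 2; 3]%N; tauto.
split.
  have := L54 hP uP hQ uQ hG0 h2G0 hm hn.
  have := tS [:: 1; 2; 4]%N; have := tS' [:: 1; 2; 4]%N; have := tE [:: 1; 2; 4]%N;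
  have := tM [:: 1; 2; 4]%N; tauto.
split.
  have := L55 hP uP hQ uQ hG0.
  have := tE [:: 1; 3; 4]%N; have := tM [:: 1; 3; 4]%N; tauto.
move=> Bd hBd.
have e := gK Bd; rewrite /f /g in e.
have k := key1 (invmx C *m Bd *m invmx A); rewrite /f e in k.
have := L56 hP uP hQ uQ hG0 hBd; tauto.
Qed.
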